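(* Consider an $\mathbb{H}_{2n+1}$-structure on $\mathbb{P}V$ such that $T$ fixes every point of the boundary hyperplane $\mathbb{P}V'$. Let $v$ be the point $\overline{\mathbb{I}\cdot o}\setminus\mathbb{I}\cdot o$ for $o$ in the open orbit, $\hat v\in V$ a nonzero representative, and $\widetilde V=V/\mathbb{C}\hat v$. Then $\mathbb{I}$ (which fixes $v$) acts trivially on $\mathbb{P}\widetilde V$.
   Context: Work over $\mathbb{C}$, $n\ge1$. The Heisenberg group $\mathbb{H}_{2n+1}$ is $\mathbb{W}\times\mathbb{C}$ ($\mathbb{W}$ a $2n$-dimensional space with non-degenerate skew form $\omega$) with law $(w_1,t_1)(w_2,t_2)=(w_1+w_2,t_1+t_2+\tfrac12\omega(w_1,w_2))$; $T=(0,1)$, $\mathbb{I}=\mathbb{C}T$ its center. $V\cong\mathbb{C}^{2n+2}$. An $\mathbb{H}_{2n+1}$-structure on $\mathbb{P}V$ is an effective algebraic action with a dense open orbit, whose boundary (complement of the open orbit) is a hyperplane $\mathbb{P}V'$. The point $v$ lies on the boundary and does not depend on the choice of $o$; projective transformations fixing $v$ preserve the line $\mathbb{C}\hat v$ and so induce projective transformations of $\mathbb{P}\widetilde V$. *)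

(* Defs.v *)
From HB Require Import structures.
From mathcomp Require Import all_boot all_algebra.
From mathcomp Require Import reals complex.
From mathcomp Require Import mpoly.

Set Implicit Arguments.
Unset Strict Implicit.
Unset Printing Implicit Defensive.

Import GRing.Theory Num.Theory.
Local Open Scope ring_scope.

(* Heisenberg group H_{2m+1} = W x C with W = 'rV_m (m = 2n), symplectic form
   omega(w1,w2) = w1 Om w2^T, law (w1,t1)(w2,t2) = (w1+w2, t1+t2+1/2 omega(w1,w2)). *)
Definition omega (C : comRingType) m (Om : 'M[C]_m) (w1 w2 : 'rV[C]_m) : C :=
  (w1 *m Om *m w2^T) 0 0.

Definition heis_mul (C : fieldType) m (Om : 'M[C]_m) (g h : 'rV[C]_m * C)
  : 'rV[C]_m * C :=
  (g.1 + h.1, g.2 + h.2 + 2^-1 * omega Om g.1 h.1).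

Definition heis_coords (C : fieldType) m (g : 'rV[C]_m * C) : 'I_(m + 1) -> C :=
  fun i => (row_mx g.1 (g.2%:M : 'M[C]_1)) 0 i.

(* vectors of V = C^N are columns; points of P V are nonzero columns up to scalars *)
Definition proj_rel (C : fieldType) N (x y : 'cV[C]_N) : Prop :=
  exists c : C, c != 0 /\ y = c *: x.

Definition vec_coords (C : fieldType) N (x : 'cV[C]_N) : 'I_N -> C :=
  fun i => x i 0.

(* The action is given by a lift rho : H -> GL(V) of H -> PGL(V) *)
Definition algebraic_map (C : fieldType) m N (rho : 'rV[C]_m * C -> 'M[C]_N) : Prop :=
  exists P : 'I_N -> 'I_N -> {mpoly C[m + 1]},
    forall g i j, rho g i j = (P i j).@[heis_coords g].

Definition proj_action (C : fieldType) m N (Om : 'M[C]_m)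
  (rho : 'rV[C]_m * C -> 'M[C]_N) : Prop :=
  (forall g, rho g \in unitmx) /\
  (forall g h, exists c : C, c != 0 /\ rho (heis_mul Om g h) = c *: (rho g *m rho h)).

Definition effective_action (C : fieldType) m N (rho : 'rV[C]_m * C -> 'M[C]_N) : Prop :=
  forall g, (forall x : 'cV[C]_N, x != 0 -> exists c : C, rho g *m x = c *: x) ->
    g = (0, 0).

Definition orbit (C : fieldType) m N (rho : 'rV[C]_m * C -> 'M[C]_N) (o x : 'cV[C]_N)
  : Prop := exists g, proj_rel (rho g *m o) x.

(* An H-structure on P V with boundary hyperplane P(ker phi): an effective algebraic
   projective action whose open orbit is exactly the complement of P(ker phi). *)
Definition heis_structure (C : fieldType) m N (Om : 'M[C]_m)
  (rho : 'rV[C]_m * C -> 'M[C]_N) (phi : 'rV[C]_N) : Prop :=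
  [/\ algebraic_map rho, proj_action Om rho, effective_action rho, phi != 0 &
    exists o0 : 'cV[C]_N, o0 != 0 /\
      forall x : 'cV[C]_N, x != 0 -> (orbit rho o0 x <-> (phi *m x) 0 0 != 0)].

(* the orbit I.[o] of the center I = C T, T = (0,1) *)
Definition center_orbit (C : fieldType) m N (rho : 'rV[C]_m * C -> 'M[C]_N)
  (o x : 'cV[C]_N) : Prop :=
  x != 0 /\ exists t : C, proj_rel (rho (0, t) *m o) x.

(* Zariski closure in P V of a set S of points (given by nonzero representatives):
   common zeros of the homogeneous polynomials vanishing on S. *)
Definition proj_closure (C : fieldType) N (S : 'cV[C]_N -> Prop) (y : 'cV[C]_N) : Prop :=
  y != 0 /\
  forall (d : nat) (p : {mpoly C[N]}), p \is d.-homog ->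
    (forall x, S x -> p.@[vec_coords x] = 0) -> p.@[vec_coords y] = 0.

(* Main.v *)
Require Import Defs.
From HB Require Import structures.
From mathcomp Require Import all_boot all_algebra.
From mathcomp Require Import reals complex.
From mathcomp Require Import mpoly.
From mathcomp Require Import ring.
Set Implicit Arguments.
Unset Strict Implicit.
Unset Printing Implicit Defensive.
Import GRing.Theory Num.Theory.
Local Open Scope ring_scope.

Section PF.
Variable C : numClosedFieldType.

Definition pf (f : C -> C) := exists q : {poly C}, forall t, f t = q.[t].

Lemma pf_const c : pf (fun _ => c).
Proof. by exists c%:P => t; rewrite hornerC. Qed.
Lemma pf_id : pf (fun t => t).
Proof. by exists 'X => t; rewrite hornerX. Qed.
Lemma pf_add f g : pf f -> pf g -> pf (fun t => f t + g t).
Proof. by move=> [p Hp] [q Hq]; exists (p + q) => t; rewrite hornerD Hp Hq. Qed.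
Lemma pf_mul f g : pf f -> pf g -> pf (fun t => f t * g t).
Proof. by move=> [p Hp] [q Hq]; exists (p * q) => t; rewrite hornerM Hp Hq. Qed.
Lemma pf_opp f : pf f -> pf (fun t => - f t).
Proof. by move=> [p Hp]; exists (- p) => t; rewrite hornerN Hp. Qed.
Lemma pf_ext f g : pf f -> (forall t, f t = g t) -> pf g.
Proof. by move=> [p Hp] E; exists p => t; rewrite -E. Qed.
Lemma pf_sum (I : Type) (r : seq I) (F : I -> C -> C) :
  (forall i, pf (F i)) -> pf (fun t => \sum_(i <- r) F i t).
Proof.
move=> H; elim: r => [|a r IH].
  by apply: (@pf_ext (fun _ => 0)); [exact: pf_const | move=> t; rewrite big_nil].
by apply: (pf_ext (pf_add (H a) IH)) => t; rewrite big_cons.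
Qed.
Lemma pf_prod (I : Type) (r : seq I) (F : I -> C -> C) :
  (forall i, pf (F i)) -> pf (fun t => \prod_(i <- r) F i t).
Proof.
move=> H; elim: r => [|a r IH].
  by apply: (@pf_ext (fun _ => 1)); [exact: pf_const | move=> t; rewrite big_nil].
by apply: (pf_ext (pf_mul (H a) IH)) => t; rewrite big_cons.
Qed.
Lemma pf_exp f k : pf f -> pf (fun t => f t ^+ k).
Proof. by move=> [p Hp]; exists (p ^+ k) => t; rewrite horner_exp Hp. Qed.

Lemma pf_roots f : pf f -> (forall k : nat, f k%:R = 0) -> forall t, f t = 0.
Proof.
move=> [q Hq] H t; rewrite Hq.
suff -> : q = 0 by rewrite horner0.
apply/eqP; apply/negPn/negP => q0.
pose rs := [seq (k%:R : C) | k <- iota 0 (size q)].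
have H1 : all (root q) rs.
  by apply/allP => x /mapP [k _ ->]; rewrite /root -Hq H.
have H2 : uniq rs.
  rewrite map_inj_uniq ?iota_uniq //.
  by move=> a b /eqP; rewrite eqr_nat => /eqP.
by have := max_poly_roots q0 H1 H2; rewrite size_map size_iota ltnn.
Qed.

Lemma pf_nonvanish f : pf f -> (forall t, f t != 0) -> forall t, f t = f 0.
Proof.
move=> [q Hq] H t.
have : size q == 1%N.
  apply/negPn/negP => /closed_rootP [x rx].
  by move: (H x); rewrite Hq -/(root q x) rx.
move=> /eqP sq; rewrite !Hq; have /size1_polyC -> : (size q <= 1)%N by rewrite sq.
by rewrite !hornerC.
Qed.

Definition pfM m n (A : C -> 'M[C]_(m, n)) := forall i j, pf (fun t => A t i j).

Lemma pfM_mul m n p (A : C -> 'M[C]_(m, n)) (B : C -> 'M[C]_(n, p)) :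
  pfM A -> pfM B -> pfM (fun t => A t *m B t).
Proof.
move=> HA HB i j.
have := @pf_sum _ (index_enum 'I_n) (fun k t => A t i k * B t k j)
   (fun k => pf_mul (HA i k) (HB k j)).
by move/pf_ext; apply => t; rewrite mxE.
Qed.
Lemma pfM_const m n (M : 'M[C]_(m, n)) : pfM (fun _ => M).
Proof. by move=> i j; apply: pf_const. Qed.
Lemma pfM_add m n (A B : C -> 'M[C]_(m, n)) :
  pfM A -> pfM B -> pfM (fun t => A t + B t).
Proof. by move=> HA HB i j; apply: (pf_ext (pf_add (HA i j) (HB i j))) => t; rewrite mxE. Qed.
Lemma pfM_scale m n (f : C -> C) (B : C -> 'M[C]_(m, n)) :
  pf f -> pfM B -> pfM (fun t => f t *: B t).
Proof. by move=> Hf HB i j; apply: (pf_ext (pf_mul Hf (HB i j))) => t; rewrite mxE. Qed.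
Lemma pfM_opp m n (B : C -> 'M[C]_(m, n)) : pfM B -> pfM (fun t => - B t).
Proof. by move=> HB i j; apply: (pf_ext (pf_opp (HB i j))) => t; rewrite mxE. Qed.

Lemma pfM_roots m n (A : C -> 'M[C]_(m, n)) : pfM A ->
  (forall k : nat, A k%:R = 0) -> forall t, A t = 0.
Proof.
move=> HA H t; apply/matrixP => i j; rewrite mxE.
by apply: (pf_roots (HA i j)) => k; rewrite H mxE.
Qed.

End PF.

Section H2.
Variable C : numClosedFieldType.

Lemma pf_heis m (i : 'I_(m + 1)) :
  pf (fun t : C => heis_coords ((0 : 'rV[C]_m), t) i).
Proof.
have E : forall t : C, heis_coords ((0 : 'rV[C]_m), t) i =
   if split i is inl _ then 0 else t.
  by move=> t; rewrite /heis_coords mxE; case: split => k; rewrite !mxE // ord1 eqxx mulr1n.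
apply: (pf_ext _ (fun t => esym (E t))).
by case: split => _; [apply: pf_const | apply: pf_id].
Qed.

Lemma pf_meval m (p : {mpoly C[m + 1]}) :
  pf (fun t : C => p.@[heis_coords ((0 : 'rV[C]_m), t)]).
Proof.
apply: (pf_ext _ (fun t => esym (mevalE _ p))).
apply: pf_sum => mm; apply: pf_mul; first exact: pf_const.
by apply: pf_prod => k; apply: pf_exp; apply: pf_heis.
Qed.

Lemma linform N (l : 'rV[C]_N) : exists p : {mpoly C[N]}, p \is 1.-homog /\
  forall x, p.@[vec_coords x] = (l *m x) 0 0.
Proof.
exists (\sum_k l 0 k *: 'X_k); split.
  apply: rpred_sum => k _; apply: rpredZ.
  by rewrite dhomogX; apply/mdeg1P; exists k.
move=> x; rewrite (big_morph _ (mevalD _) (meval0 _)) mxE.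
by apply: eq_bigr => k _; rewrite mevalZ mevalXU.
Qed.

End H2.

Section H3.
Variable C : fieldType.

Lemma nzcol N (x : 'cV[C]_N) : x != 0 -> exists i, x i 0 != 0.
Proof.
move=> x0; apply/existsP; apply: contraR x0 => /existsPn H.
by apply/eqP/matrixP => i k; rewrite ord1 mxE; apply/eqP/negPn/H.
Qed.

Lemma nzrow N (x : 'rV[C]_N) : x != 0 -> exists i, x 0 i != 0.
Proof.
move=> x0; apply/existsP; apply: contraR x0 => /existsPn H.
by apply/eqP/matrixP => k i; rewrite ord1 mxE; apply/eqP/negPn/H.
Qed.

Lemma unit_ker N (M : 'M[C]_N) (x : 'cV[C]_N) : M \in unitmx -> M *m x = 0 -> x = 0.
Proof. by move=> Mu E; rewrite -(mulKmx Mu x) E mulmx0. Qed.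

Lemma propE N (x y : 'cV[C]_N) j : x j 0 != 0 ->
  (forall i, y i 0 * x j 0 = x i 0 * y j 0) -> y = (y j 0 / x j 0) *: x.
Proof.
move=> xj H; apply/matrixP => i k; rewrite ord1 mxE.
by rewrite mulrAC [y j 0 * _]mulrC -H mulfK.
Qed.

Lemma scal_cancel N (x : 'cV[C]_N) a b : x != 0 -> a *: x = b *: x -> a = b.
Proof.
move=> x0 /eqP; rewrite -subr_eq0 -scalerBl scaler_eq0 (negbTE x0) orbF subr_eq0.
by move/eqP.
Qed.

Lemma unif N (phi : 'rV[C]_N) (M : 'M[C]_N) (k0 : 'cV[C]_N) c0 :
  (forall y : 'cV[C]_N, (phi *m y) 0 0 = 0 -> exists c, M *m y = c *: y) ->
  (phi *m k0) 0 0 = 0 -> k0 != 0 -> M *m k0 = c0 *: k0 ->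
  forall k : 'cV[C]_N, (phi *m k) 0 0 = 0 -> M *m k = c0 *: k.
Proof.
move=> H hk0 k00 Mk0 k hk.
have [c Hc] := H k hk.
have hs : (phi *m (k0 + k)) 0 0 = 0 by rewrite mulmxDr mxE hk0 hk addr0.
have [c3 Hc3] := H (k0 + k) hs.
rewrite mulmxDr Mk0 Hc in Hc3.
have E : (c3 - c0) *: k0 = (c - c3) *: k.
  apply/matrixP => i z; have := congr1 (fun X : 'cV[C]_N => X i z) Hc3; rewrite /= !mxE => h.
  have : (c3 - c0) * k0 i z - (c - c3) * k i z =
     c3 * (k0 i z + k i z) - (c0 * k0 i z + c * k i z) by ring.
  by rewrite -h subrr => /eqP; rewrite subr_eq0 => /eqP.
have [e3|n3] := eqVneq c3 c0.
  move: E; rewrite e3 subrr scale0r => /esym/eqP; rewrite scaler_eq0.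
  case/orP => [/eqP|/eqP ->]; last by rewrite mulmx0 scaler0.
  by move/eqP; rewrite subr_eq0 => /eqP ec; rewrite Hc ec.
have Ek0 : k0 = ((c - c3) / (c3 - c0)) *: k.
  by rewrite mulrC -scalerA -E scalerA mulVf ?scale1r // subr_eq0.
have : M *m k0 = c *: k0.
  by rewrite Ek0 -scalemxAr Hc !scalerA mulrC.
rewrite Mk0 => /(scal_cancel k00) ->; exact: Hc.
Qed.

End H3.

Lemma mxZE (C : fieldType) m n (a : C) (M : 'M[C]_(m, n)) i j : (a *: M) i j = a * M i j.
Proof. by rewrite mxE. Qed.
Lemma mxNE (C : fieldType) m n (M : 'M[C]_(m, n)) i j : (- M) i j = - M i j.
Proof. by rewrite mxE. Qed.
Lemma mxDE (C : fieldType) m n (M M' : 'M[C]_(m, n)) i j : (M + M') i j = M i j + M' i j.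
Proof. by rewrite mxE. Qed.
Lemma rowEE (C : fieldType) m n (M : 'M[C]_(m, n)) i j : (row i M) 0 j = M i j.
Proof. by rewrite mxE. Qed.


Local Open Scope complex_scope.

Theorem lemma2p6 (R : realType) (n : nat) (Om : 'M[R[i]]_(2 * n))
  (rho : 'rV[R[i]]_(2 * n) * R[i] -> 'M[R[i]]_((2 * n).+2))
  (phi : 'rV[R[i]]_((2 * n).+2)) :
  (0 < n)%N ->
  Om^T = - Om -> \det Om != 0 ->
  heis_structure Om rho phi ->
  (* T fixes every point of the boundary hyperplane P(ker phi) *)
  (forall x : 'cV[R[i]]_((2 * n).+2), x != 0 -> (phi *m x) 0 0 = 0 ->
     exists c : R[i], rho (0, 1) *m x = c *: x) ->
  forall o vhat : 'cV[R[i]]_((2 * n).+2),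
    o != 0 -> (phi *m o) 0 0 != 0 ->
    (* [vhat] = v is the point of closure(I.o) \ I.o *)
    proj_closure (center_orbit rho o) vhat -> ~ center_orbit rho o vhat ->
    (* I acts trivially on P(V / C vhat) *)
    forall (t : R[i]) (x : 'cV[R[i]]_((2 * n).+2)),
      exists lam mu : R[i], rho (0, t) *m x = lam *: x + mu *: vhat.
Proof.
move=> n0 OmT detOm [Halg [Hunit Hmul0] Heff phi0 Hopen] Hfix1 o vhat o0 po0 Hcl Hnorb t x.
pose A := fun s : R[i] => rho (0, s).
have HpA : pfM A.
  case: Halg => P HP i j; apply: (pf_ext (pf_meval (P i j))) => s.
  by rewrite /A HP.
have HAu : forall s, A s \in unitmx by move=> s; apply: Hunit.
have Hmul : forall s u, exists c, c != 0 /\ A (s + u) = c *: (A s *m A u).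
  move=> s u; have [c [c0 E]] := Hmul0 (0, s) (0, u); exists c; split => //.
  rewrite /A -E /heis_mul /=.
  have -> : omega Om 0 0 = 0 by rewrite /omega !mul0mx mxE.
  by rewrite addr0 mulr0 addr0.
have [s0 [s00 HA0]] : exists s0, s0 != 0 /\ A 0 = s0%:M.
  have [c [c0 E]] := Hmul 0 0; rewrite addr0 in E.
  exists c^-1; split; first by rewrite invr_eq0.
  have : invmx (A 0) *m A 0 = 1%:M by rewrite mulVmx.
  rewrite [X in invmx _ *m X]E -scalemxAr mulmxA mulVmx // mul1mx => H.
  by rewrite -scalemx1 -H scalerA mulVf // scale1r.
have Hfix : forall s (y : 'cV[R[i]]_((2 * n).+2)), (phi *m y) 0 0 = 0 ->
    exists c, A s *m y = c *: y.
  move=> s y hy; have [->|y0] := eqVneq y 0.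
    by exists 0; rewrite mulmx0 scaler0.
  have [c1 Hc1] := Hfix1 y y0 hy.
  have Hnat : forall k : nat, exists c, A k%:R *m y = c *: y.
    elim=> [|k [ck Hck]]; first by exists s0; rewrite HA0 mul_scalar_mx.
    have [c [_ E]] := Hmul k%:R 1.
    exists (c * (c1 * ck)).
    by rewrite -[k.+1]addn1 natrD E -scalemxAl -mulmxA Hc1 -scalemxAr Hck !scalerA mulrA.
  have [j yj] := nzcol y0.
  have Hij : forall i, (A s *m y) i 0 * y j 0 = y i 0 * (A s *m y) j 0.
    move=> i; apply/eqP; rewrite -subr_eq0; apply/eqP.
    pose f := fun u => (A u *m y) i 0 * y j 0 - y i 0 * (A u *m y) j 0.
    have Hy := pfM_mul HpA (pfM_const y).
    have Hpf : pf f.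
      apply: pf_add; first by apply: pf_mul; [apply: Hy | apply: pf_const].
      by apply: pf_opp; apply: pf_mul; [apply: pf_const | apply: Hy].
    apply: (pf_roots Hpf) => k; have [ck Hk] := Hnat k.
    rewrite /f Hk !mxE; ring.
  by exists ((A s *m y) j 0 / y j 0); apply: propE.
have [j phj] := nzrow phi0.
pose i1 : 'I_((2 * n).+2) := if j == ord0 then ord_max else ord0.
have i1j : i1 != j.
  rewrite /i1; have [->|jn] := eqVneq j ord0; first by [].
  by rewrite eq_sym.
pose k0 : 'cV[R[i]]_((2 * n).+2) :=
  phi 0 j *: delta_mx i1 0 - phi 0 i1 *: delta_mx j 0.
have Hk0 : (phi *m k0) 0 0 = 0.
  by rewrite /k0 mulmxBr -!scalemxAr -!colE !mxE mulrC subrr.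
have k0i : k0 i1 0 = phi 0 j.
  by rewrite /k0 !mxE !eqxx (negbTE i1j) /= mulr1 mulr0 subr0.
have k00 : k0 != 0.
  by apply/eqP => E; move: k0i; rewrite E mxE => /esym/eqP; rewrite (negbTE phj).
pose c := fun s => (A s *m k0) i1 0 / k0 i1 0.
have Hc : forall s, A s *m k0 = c s *: k0.
  move=> s; have [c' Hc'] := Hfix s k0 Hk0.
  suff -> : c s = c' by [].
  by rewrite /c Hc' mxE mulfK // k0i.
have HKc : forall s (k : 'cV[R[i]]_((2 * n).+2)), (phi *m k) 0 0 = 0 ->
    A s *m k = c s *: k.
  by move=> s; apply: (unif (Hfix s) Hk0 k00 (Hc s)).
have pfc : pf c.
  by apply: pf_mul; [apply: (pfM_mul HpA (pfM_const k0)) | apply: pf_const].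
have cnz : forall s, c s != 0.
  move=> s; apply/eqP => cs0; have := Hc s; rewrite cs0 scale0r.
  by move/(unit_ker (HAu s)) => E; move: k00; rewrite E eqxx.
have c0s0 : c 0 = s0.
  apply/esym/(scal_cancel k00); by rewrite -Hc HA0 mul_scalar_mx.
have HK : forall s (k : 'cV[R[i]]_((2 * n).+2)), (phi *m k) 0 0 = 0 ->
    A s *m k = s0 *: k.
  by move=> s k hk; rewrite HKc // (pf_nonvanish pfc cnz) c0s0.
set po := (phi *m o) 0 0 in po0.
pose a := fun s => (phi *m (A s *m o)) 0 0 / po.
have pfa : pf a.
  apply: pf_mul; last by apply: pf_const.
  exact: (pfM_mul (pfM_const phi) (pfM_mul HpA (pfM_const o))).
have anz : forall s, a s != 0.
  move=> s; rewrite /a mulf_eq0 invr_eq0 (negbTE po0) orbF; apply/eqP => h.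
  have E := HK s _ h.
  have : A s *m (A s *m o - s0 *: o) = 0.
    by rewrite mulmxBr -scalemxAr E subrr.
  move/(unit_ker (HAu s))/eqP; rewrite subr_eq0 => /eqP E2.
  move: h; rewrite E2 -scalemxAr mxE => /eqP; rewrite mulf_eq0 (negbTE s00).
  by rewrite (negbTE po0).
have HaS : forall s, (phi *m (A s *m o)) 0 0 = s0 * po.
  move=> s; have := pf_nonvanish pfa anz s.
  have sc : forall (M : 'M[R[i]]_1), (s0 *: M) 0 0 = s0 * M 0 0 by move=> M; rewrite mxE.
  rewrite /a HA0 mul_scalar_mx -scalemxAr sc.
  by move/(congr1 (fun z => z * po)); rewrite !divfK.
pose w := fun s => A s *m o - s0 *: o.
have Hw : forall s, (phi *m w s) 0 0 = 0.
  by move=> s; rewrite /w mulmxBr mxDE HaS -scalemxAr mxNE mxZE subrr.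
have Hadd : forall s u, w (s + u) = w s + w u.
  move=> s u; have [k [k0' E]] := Hmul s u.
  have E2 : A (s + u) *m o = k *: (s0 *: (A s *m o) + s0 *: w u).
    rewrite E -scalemxAl -mulmxA.
    have -> : A u *m o = s0 *: o + w u by rewrite /w addrC subrK.
    by rewrite mulmxDr -scalemxAr (HK s (w u) (Hw u)).
  have ks : k * s0 = 1.
    have := congr1 (fun X => (phi *m X) 0 0) E2.
    rewrite /= HaS -!scalemxAr mulmxDr -!scalemxAr !(mxZE, mxDE) HaS Hw mulr0 addr0.
    move/(congr1 (fun z => z / (s0 * po))).
    by rewrite mulrA mulfV ?mulf_neq0 // mulfK ?mulf_neq0.
  rewrite /w E2 scalerDr !scalerA ks !scale1r.
  by rewrite -/(w u) addrAC.
have Hlin : forall s, w s = s *: w 1.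
  have Hnat : forall k : nat, w k%:R = k%:R *: w 1.
    elim=> [|k IH]; first by rewrite scale0r /w HA0 mul_scalar_mx subrr.
    by rewrite -[k.+1]addn1 natrD Hadd IH scalerDl scale1r.
  have pw : pfM w.
    exact: (pfM_add (pfM_mul HpA (pfM_const o)) (pfM_const (- (s0 *: o)))).
  have pz : pfM (fun s => w s - s *: w 1).
    exact: (pfM_add pw (pfM_opp (pfM_scale (pf_id _) (pfM_const (w 1))))).
  move=> s; apply/eqP; rewrite -subr_eq0; apply/eqP.
  by apply: (pfM_roots pz) => k; rewrite Hnat subrr.
set w1 := w 1 in Hlin.
have HAo : forall s, A s *m o = s0 *: o + s *: w1.
  by move=> s; rewrite -Hlin /w addrC subrK.
have Hw1 : (phi *m w1) 0 0 = 0 by apply: Hw.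
clearbody w1.
pose P : 'M[R[i]]_((2 * n).+2) := 1%:M - po^-1 *: (o *m phi).
have HPx : forall y, P *m y = y - (po^-1 * (phi *m y) 0 0) *: o.
  move=> y; rewrite /P mulmxBl mul1mx -scalemxAl -mulmxA.
  by rewrite {1}[phi *m y]mx11_scalar mul_mx_scalar scalerA.
clearbody P.
have Horb : forall y, center_orbit rho o y -> exists c s, y = c *: (A s *m o).
  by move=> y [_ [s [cc [_ ->]]]]; exists cc, s.
have HPorb : forall y, center_orbit rho o y -> exists e, P *m y = e *: w1.
  move=> y /Horb [cc [s ->]]; exists (cc * s).
  rewrite HPx HAo -scalemxAr mulmxDr -!scalemxAr !(mxZE, mxDE) Hw1 mulr0 addr0.
  rewrite scalerDr !scalerA -/po.
  have -> : po^-1 * (cc * (s0 * po)) = cc * s0.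
    by rewrite mulrC -!mulrA mulfV // mulr1.
  by rewrite addrAC subrr add0r.
have Hform : forall l : 'rV[R[i]]_((2 * n).+2),
    (forall y, center_orbit rho o y -> (l *m y) 0 0 = 0) -> (l *m vhat) 0 0 = 0.
  move=> l H; have [p [hp ep]] := linform l; rewrite -ep.
  by apply: Hcl.2 hp _ => y hy; rewrite ep; apply: H.
have [beta Pv] : exists beta, P *m vhat = beta *: w1.
  have [w10|w1n] := eqVneq w1 0.
    exists 0; rewrite scale0r; apply/matrixP => i z; rewrite ord1 [RHS]mxE.
    have := Hform (row i P); rewrite -row_mul mxE; apply => y hy.
    have [e He] := HPorb y hy.
    by rewrite -row_mul mxE He w10 scaler0 mxE.
  have [j' wj] := nzcol w1n.
  exists ((P *m vhat) j' 0 / w1 j' 0); apply: propE => // i.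
  have := Hform (w1 j' 0 *: row i P - w1 i 0 *: row j' P).
  rewrite mulmxBl -!scalemxAl -!row_mul mxDE mxNE !mxZE !rowEE.
  move=> h; apply/eqP; rewrite -subr_eq0 [_ * w1 j' 0]mulrC.
  apply/eqP; apply: h => y hy.
  have [e He] := HPorb y hy.
  rewrite mulmxBl -!scalemxAl -!row_mul mxDE mxNE !mxZE !rowEE He !mxZE.
  by ring.
pose g := po^-1 * (phi *m vhat) 0 0.
have Hv : vhat = beta *: w1 + g *: o by rewrite -Pv HPx subrK.
have g0 : g = 0.
  apply/eqP/negPn/negP => gn; apply: Hnorb; split; first exact: Hcl.1.
  exists (beta * s0 / g); exists (g / s0); split.
    by rewrite mulf_neq0 // invr_eq0.
  change (vhat = g / s0 *: (A (beta * s0 / g) *m o)).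
  rewrite HAo scalerDr !scalerA divfK // Hv addrC; congr (_ + _ *: _).
  by field; rewrite gn s00.
rewrite g0 scale0r addr0 in Hv.
have b0 : beta != 0.
  by apply/eqP => b0; move: Hcl.1; rewrite Hv b0 scale0r eqxx.
pose al := po^-1 * (phi *m x) 0 0.
have ex : x = P *m x + al *: o by rewrite HPx subrK.
have hPx : (phi *m (P *m x)) 0 0 = 0.
  rewrite HPx mulmxBr mxDE mxNE -scalemxAr mxZE -/po /al.
  by rewrite mulrAC mulVf // mul1r subrr.
exists s0, (al * t / beta).
change (A t *m x = s0 *: x + al * t / beta *: vhat).
have -> : A t *m x = A t *m (P *m x + al *: o) by rewrite -ex.
rewrite mulmxDr HK // -scalemxAr HAo {2}ex Hv.
rewrite !scalerDr !scalerA divfK // [al * s0]mulrC.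
by rewrite addrA.
Qed.
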